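(* Assume the $abc$-conjecture. Let $k \ge 3$ be an integer and $\epsilon>0$. Then there is a constant $C_{k,\epsilon}>0$ such that for all real $x \ge 1$ and all real $y$ with $1 \le y \le x$, \[ Q_k(x+y) - Q_k(x) \le C_{k,\epsilon}\, y^{(2+\epsilon)/k}. \]
   Context: A positive integer $n$ is $k$-full if every prime $p$ dividing $n$ satisfies $p^k \mid n$. $Q_k(x)$ denotes the number of $k$-full positive integers $n \le x$. For a nonzero integer $m$, $\kappa(m)=\prod_{p\mid m} p$ is the product of the distinct primes dividing $m$. The $abc$-conjecture is the statement: for every $\epsilon>0$ there is a constant $C_\epsilon>0$ such that for all integers $a,b,c$ with $a+b=c$ and $\gcd(a,b)=1$, one has $\max\{|a|,|b|,|c|\} \le C_\epsilon\, \kappa(abc)^{1+\epsilon}$. *)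

(* Defs.v *)
From Stdlib Require Import Reals ZArith.
From mathcomp Require Import all_boot.

Definition kappa (m : Z) : nat := (\prod_(p <- primes (Z.abs_nat m)) p)%N.

Definition kfull (k n : nat) : bool :=
  (0 < n)%N && all (fun p => p ^ k %| n)%N (primes n).

Definition Qk (k : nat) (x : R) : nat :=
  (\sum_(1 <= n < (Z.to_nat (Int_part x)).+1) (kfull k n : nat))%N.

Local Open Scope R_scope.

(* The abc-conjecture (restricted to abc <> 0, so that kappa(abc) is as in
   the paper's definition for nonzero integers). *)
Definition abc_conjecture : Prop :=
  forall eps : R, 0 < eps ->
  exists C : R, 0 < C /\
  forall a b c : Z, (a + b = c)%Z -> Z.gcd a b = 1%Z -> (a * b * c <> 0)%Z ->
    IZR (Z.max (Z.abs a) (Z.max (Z.abs b) (Z.abs c)))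
      <= C * Rpower (INR (kappa (a * b * c))) (1 + eps).

(* Main.v *)
From Stdlib Require Import Reals ZArith Lra Lia.
From mathcomp Require Import all_boot zify.
Require Import Defs.
Definition rad (n : nat) : nat := (\prod_(p <- primes n) p)%N.

Lemma prod_dvd (s : seq nat) (e N : nat) :
  uniq s -> all prime s -> (forall p, p \in s -> p ^ e %| N) ->
  (\prod_(p <- s) p) ^ e %| N.
Proof.
elim: s => [|p s IH] /=; first by rewrite big_nil exp1n dvd1n.
move=> /andP[ps us] /andP[pp aps] H.
rewrite big_cons expnMn Gauss_dvd.
  apply/andP; split; first by apply: H; rewrite inE eqxx.
  by apply: IH => // q qs; apply: H; rewrite inE qs orbT.
apply: coprimeXl; apply: coprimeXr.
rewrite prime_coprime // Euclid_dvd_prod // big_has.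
apply/hasP => -[q qs pq].
have qp : prime q by move/allP: aps; apply.
rewrite dvdn_prime2 // in pq.
by move/eqP: pq => pq; subst q; rewrite qs in ps.
Qed.


Lemma rad_gt0 n : 0 < rad n.
Proof.
rewrite /rad big_seq; apply: prodn_cond_gt0 => p.
by rewrite mem_primes => /andP[pp _]; apply: prime_gt0.
Qed.

Lemma rad_dvd m N : 0 < N -> (forall p, prime p -> p %| m -> p %| N) -> rad m %| N.
Proof.
move=> N0 H; rewrite /rad -(expn1 (\prod_(p <- _) p)).
apply: prod_dvd; first exact: primes_uniq.
  by apply/allP => p; rewrite mem_primes => /andP[].
by move=> p; rewrite mem_primes expn1 => /and3P[pp _ pm]; apply: H.
Qed.

Lemma rad_kfull k n : kfull k n -> rad n ^ k <= n.
Proof.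
move=> /andP[n0 /allP H]; apply: dvdn_leq => //.
apply: prod_dvd; first exact: primes_uniq.
  by apply/allP => p; rewrite mem_primes => /andP[].
exact: H.
Qed.

Lemma mem_rad p n : p \in primes n -> p %| rad n.
Proof. by move=> pn; rewrite /rad (big_rem p pn) /= dvdn_mulr. Qed.

Lemma nat_gap n1 n2 : 0 < n1 -> n1 < n2 ->
  exists a b c g, [/\ a + b = c, coprime a b, 0 < a, 0 < b & 0 < c] /\
   [/\ 0 < g, n2 = c * g, n2 - n1 = b * g & rad (a * b * c) <= rad n1 * rad n2 * b].
Proof.
move=> n10 lt12.
set d := n2 - n1.
have d0 : 0 < d by rewrite subn_gt0.
set g := gcdn n1 d.
have g0 : 0 < g by rewrite gcdn_gt0 n10.
have gn1 : g %| n1 by apply: dvdn_gcdl.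
have gd : g %| d by apply: dvdn_gcdr.
have e2 : n2 = n1 + d by rewrite /d subnKC // ltnW.
have gn2 : g %| n2 by rewrite e2 dvdn_add.
exists (n1 %/ g), (d %/ g), (n2 %/ g), g.
have a0 : 0 < n1 %/ g by rewrite divn_gt0 // dvdn_leq.
have b0 : 0 < d %/ g by rewrite divn_gt0 // dvdn_leq.
have c0 : 0 < n2 %/ g by rewrite divn_gt0 // dvdn_leq // (leq_trans n10) // ltnW.
split; split => //.
- by rewrite e2 divnDl.
- rewrite /coprime; apply/eqP.
  have : gcdn (n1 %/ g) (d %/ g) * g = g by rewrite muln_gcdl !divnK.
  by move=> H; apply/eqP; rewrite -(eqn_pmul2r g0) mul1n H.
- by rewrite divnK.
- by rewrite divnK.
have an1 : n1 %/ g %| n1 by apply/dvdnP; exists g; rewrite mulnC divnK.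
have bd : d %/ g %| d by apply/dvdnP; exists g; rewrite mulnC divnK.
have cn2 : n2 %/ g %| n2 by apply/dvdnP; exists g; rewrite mulnC divnK.
apply: dvdn_leq; first by rewrite !muln_gt0 b0 !rad_gt0.
apply: rad_dvd; first by rewrite !muln_gt0 b0 !rad_gt0.
move=> p pp; rewrite !Euclid_dvdM // => /orP[/orP[pa|pb]|pc].
- apply/orP; left; apply/orP; left; apply: mem_rad.
  by rewrite mem_primes pp n10 (dvdn_trans pa).
- by rewrite pb !orbT.
- apply/orP; left; apply/orP; right; apply: mem_rad.
  by rewrite mem_primes pp (leq_trans n10 (ltnW lt12)) (dvdn_trans pc).
Qed.

Local Open Scope R_scope.


Lemma INR_muln m n : INR (m * n)%N = INR m * INR n.
Proof. exact: mult_INR. Qed.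
Lemma ln_le' x y : 0 < x -> x <= y -> ln x <= ln y.
Proof. move=> x0 [h|->]; [left; exact: ln_increasing | right; reflexivity]. Qed.
Arguments ln_le' {x y}.
Lemma ln_ge0 x : 1 <= x -> 0 <= ln x.
Proof. move=> h; rewrite -ln_1; apply: ln_le' => //; lra. Qed.
Lemma INR_pos n : (0 < n)%N -> 0 < INR n.
Proof. by move=> h; apply: lt_0_INR; apply/ltP. Qed.
Arguments INR_pos {n}.
Lemma INR_ge1 n : (0 < n)%N -> 1 <= INR n.
Proof. by move=> h; apply: (le_INR 1); apply/leP. Qed.
Arguments INR_ge1 {n}.
Lemma INR_subn m n : (n <= m)%N -> INR (m - n)%N = INR m - INR n.
Proof. move=> h; rewrite minus_INR //; apply/leP. done. Qed.

Lemma count_gap (f : nat -> bool) (a B : nat) (D : R) :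
  (forall n m, (a < n)%N -> (n < m)%N -> (m <= B)%N -> f n -> f m -> D <= INR (m - n)) ->
  forall b, (b <= B)%N -> (0 < \sum_(a.+1 <= n < b.+1) (f n : nat))%N ->
  exists n, [/\ (a < n)%N, (n <= b)%N, f n &
    (INR (\sum_(a.+1 <= i < b.+1) (f i : nat)) - 1) * D <= INR n - INR a.+1].
Proof.
move=> Hgap; elim=> [|b IH] bB.
  by rewrite big_geq.
have [ab|ba] := leqP a b; last first.
  by rewrite big_geq.
have E : (\sum_(a.+1 <= i < b.+2) (f i : nat) = \sum_(a.+1 <= i < b.+1) (f i : nat) + f b.+1)%N.
  by rewrite big_nat_recr.
rewrite E.
case fb: (f b.+1); last first.
  rewrite addn0 => T0.
  have [n [an nb fn H]] := IH (ltnW bB) T0.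
  by exists n; split => //; apply: leqW.
rewrite addn1.
case T0: (\sum_(a.+1 <= i < b.+1) (f i : nat))%N => [|t].
  move=> _; exists b.+1; split; [by []|by []|by []|].
  change (INR 1) with 1.
  have : INR a.+1 <= INR b.+1 by apply: le_INR; apply/leP.
  lra.
move=> _.
have := IH (ltnW bB); rewrite T0 => /(_ isT) [n [an nb fn H]].
exists b.+1; split; [by []|by []|by []|].
have Hd := Hgap n b.+1 an (leq_ltn_trans nb (ltnSn b)) bB fn fb.
rewrite INR_subn in Hd; last by apply: (leq_trans nb).
rewrite (S_INR t.+1). lra.
Qed.

Lemma real_gap (e C : R) : 0 < e -> 0 < C ->
  (forall a b c : Z, (a + b = c)%Z -> Z.gcd a b = 1%Z -> (a * b * c <> 0)%Z ->
    IZR (Z.max (Z.abs a) (Z.max (Z.abs b) (Z.abs c)))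
      <= C * Rpower (INR (kappa (a * b * c))) (1 + e)) ->
  forall n1 n2 : nat, (0 < n1)%N -> (n1 < n2)%N ->
  ln (INR n2) <= ln C + (1 + e) * (ln (INR (rad n1)) + ln (INR (rad n2)) + ln (INR (n2 - n1))).
Proof.
move=> e0 C0 Habc n1 n2 n10 lt12.
have [a [b [c [g [[abc cop a0 b0 c0] [g0 e2 ed hrad]]]]]] := nat_gap n1 n2 n10 lt12.
have H := Habc (Z.of_nat a) (Z.of_nat b) (Z.of_nat c).
have Hk : kappa (Z.of_nat a * Z.of_nat b * Z.of_nat c) = rad (a * b * c).
  have -> : (Z.of_nat a * Z.of_nat b * Z.of_nat c)%Z = Z.of_nat (a * b * c)%N by lia.
  by rewrite /kappa Zabs2Nat.id.
rewrite Hk in H.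
have Hc : INR c <= C * Rpower (INR (rad (a * b * c))) (1 + e).
  apply: Rle_trans (H _ _ _); first 1 last.
  - lia.
  - lia.
  - nia.
  rewrite INR_IZR_INZ; apply: IZR_le; lia.
have R0 := INR_pos (rad_gt0 (a * b * c)).
have lc : ln (INR c) <= ln C + (1 + e) * ln (INR (rad (a * b * c))).
  have := ln_le' (INR_pos c0) Hc.
  rewrite /Rpower ln_mult; [rewrite ln_exp; done|done|apply: exp_pos].
have hR : INR (rad (a * b * c)) <= INR (rad n1) * INR (rad n2) * INR b.
  by rewrite -!INR_muln; apply: le_INR; apply/leP.
have lR : ln (INR (rad (a * b * c))) <= ln (INR (rad n1)) + ln (INR (rad n2)) + ln (INR b).
  have := ln_le' R0 hR.
  rewrite !ln_mult //; try apply: Rmult_lt_0_compat; try apply: INR_pos; try apply: rad_gt0; done.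
have ln2 : ln (INR n2) = ln (INR c) + ln (INR g) by rewrite e2 INR_muln ln_mult //; apply: INR_pos.
have lnd : ln (INR (n2 - n1)) = ln (INR b) + ln (INR g) by rewrite ed INR_muln ln_mult //; apply: INR_pos.
have lg := ln_ge0 _ (INR_ge1 g0).
rewrite ln2 lnd.
have := Rmult_le_compat_l (1 + e) _ _ (ltac:(lra) : 0 <= 1 + e) lR.
have : 0 <= e * ln (INR g) by apply: Rmult_le_pos; lra.
nra.
Qed.


Definition alpha (e K : R) := (1 - 2 * (1 + e) / K) / (1 + e).
Definition cst (e K lC : R) := (lC + 2 * (1 + e) * ln 2 / K) / (1 + e).

Lemma alpha_facts e K eps : 0 < e -> e <= 1/2 -> 3 <= K -> (K + 2) * e <= eps ->
  0 <= alpha e K /\ 1 - alpha e K <= (2 + eps) / K.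
Proof.
move=> e0 e1 K3 he; rewrite /alpha; split.
  apply: Rmult_le_pos; last by apply: Rlt_le; apply: Rinv_0_lt_compat; lra.
  have : 2 * (1 + e) / K <= 1.
    apply: (Rmult_le_reg_r K); first lra.
    field_simplify; lra.
  lra.
have -> : 1 - (1 - 2 * (1 + e) / K) / (1 + e) = e / (1 + e) + 2 / K by field; lra.
have h1 : e / (1 + e) <= e.
  apply: (Rmult_le_reg_r (1 + e)); first lra.
  field_simplify; nra.
have h2 : e <= eps / K.
  apply: (Rmult_le_reg_r K); first lra.
  field_simplify; nra.
have -> : (2 + eps) / K = 2 / K + eps / K by field; lra.
lra.
Qed.

Lemma gap_alg e K lC X lr1 lr2 lm ld : 0 < e -> 3 <= K ->
  K * lr1 <= ln 2 + X -> K * lr2 <= ln 2 + X -> X < lm ->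
  lm <= lC + (1 + e) * (lr1 + lr2 + ld) ->
  alpha e K * X - cst e K lC <= ld.
Proof.
move=> e0 K3 h1 h2 hX hm.
set u := (ln 2 + X) / K.
have u1 : lr1 <= u.
  apply: (Rmult_le_reg_r K); first lra. rewrite /u.
  have -> : (ln 2 + X) / K * K = ln 2 + X by field; lra.
  lra.
have u2 : lr2 <= u.
  apply: (Rmult_le_reg_r K); first lra. rewrite /u.
  have -> : (ln 2 + X) / K * K = ln 2 + X by field; lra.
  lra.
have E : (1 + e) * (alpha e K * X - cst e K lC) = X - lC - 2 * (1 + e) * u.
  rewrite /alpha /cst /u. field; lra.
apply: (Rmult_le_reg_l (1 + e)); first lra.
rewrite E.
have : (1 + e) * (lr1 + lr2) <= (1 + e) * (2 * u).
  apply: Rmult_le_compat_l; lra.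
nra.
Qed.

Lemma exp_le' a b : a <= b -> exp a <= exp b.
Proof. by case=> [h|->]; [left; apply: exp_increasing | right]. Qed.

Lemma INR_expn m n : INR (m ^ n)%N = INR m ^ n.
Proof. elim: n => [|n IH] //=; rewrite expnS INR_muln IH; ring. Qed.

Theorem theorem4 :
  abc_conjecture ->
  forall (k : nat) (eps : R), (3 <= k)%N -> 0 < eps ->
  exists C : R, 0 < C /\
  forall x y : R, 1 <= x -> 1 <= y -> y <= x ->
    INR (Qk k (x + y)) - INR (Qk k x) <= C * Rpower y ((2 + eps) / INR k).
Proof.
move=> Habc k eps k3 eps0.
set K := INR k.
have K3 : 3 <= K.
  rewrite /K; replace 3 with (INR 3) by (simpl; lra); apply: le_INR; apply/leP; done.
set e := Rmin (1/2) (eps / (K + 2)).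
have e0 : 0 < e.
  rewrite /e; apply: Rmin_glb_lt; first lra.
  apply: Rdiv_lt_0_compat; lra.
have e1 : e <= 1/2 by apply: Rmin_l.
have e2 : (K + 2) * e <= eps.
  have : e <= eps / (K + 2) by apply: Rmin_r.
  move=> h; have -> : eps = (K + 2) * (eps / (K + 2)) by field; lra.
  apply: Rmult_le_compat_l; lra.
have [al0 al1] := alpha_facts e K eps e0 e1 K3 e2.
have [C [C0 HC]] := Habc e e0.
set c0 := cst e K (ln C).
set al := alpha e K.
exists (1 + exp c0); split; first by have := exp_pos c0; lra.
move=> x y hx hy hyx.
have ip : forall r, 0 <= r -> INR (Z.to_nat (Int_part r)) <= r < INR (Z.to_nat (Int_part r)) + 1.
  move=> r r0; have [b1 b2] := base_Int_part r.
  have hz : (0 <= Int_part r)%Z.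
    apply: Zlt_succ_le; apply: lt_IZR; rewrite succ_IZR /=; lra.
  rewrite INR_IZR_INZ Z2Nat.id //; lra.
have [hN1 hN2] := ip x ltac:(lra).
have [hM1 hM2] := ip (x + y) ltac:(lra).
set N := Z.to_nat (Int_part x) in hN1 hN2 *.
set M := Z.to_nat (Int_part (x + y)) in hM1 hM2 *.
have NM : (N <= M)%N.
  have : (N < M.+1)%N by apply/ltP; apply: INR_lt; rewrite S_INR; lra.
  by [].
have Qsplit : Qk k (x + y) = (Qk k x + \sum_(N.+1 <= n < M.+1) (kfull k n : nat))%N.
  by rewrite /Qk -/N -/M (big_cat_nat _ (n := N.+1)).
rewrite Qsplit plus_INR.
set T := (\sum_(N.+1 <= n < M.+1) (kfull k n : nat))%N.
set Rp := Rpower y ((2 + eps) / K).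
have lny : 0 <= ln y by apply: ln_ge0.
have beta0 : 0 <= (2 + eps) / K by apply: Rmult_le_pos; [lra| apply: Rlt_le; apply: Rinv_0_lt_compat; lra].
have Rp1 : 1 <= Rp.
  rewrite /Rp /Rpower; have := exp_ineq1_le ((2 + eps) / K * ln y).
  have : 0 <= (2 + eps) / K * ln y by apply: Rmult_le_pos.
  lra.
have ec0 := exp_pos c0.
suff : INR T <= 1 + exp c0 * Rp.
  have : exp c0 * Rp <= exp c0 * Rp * Rp.
    rewrite -{1}(Rmult_1_r (exp c0 * Rp)); apply: Rmult_le_compat_l => //.
    by apply: Rmult_le_pos; lra.
  nra.
case: (posnP T) => [T0|Tpos].
  rewrite T0 /=; have : 0 <= exp c0 * Rp by apply: Rmult_le_pos; lra.
  lra.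
set D := exp (al * ln x - c0).
have D0 : 0 < D by apply: exp_pos.
have Hgap : forall n m, (N < n)%N -> (n < m)%N -> (m <= M)%N -> kfull k n -> kfull k m ->
    D <= INR (m - n).
  move=> n m Nn nm mM kn km.
  have n0 : (0 < n)%N by case/andP: kn.
  have xn : x < INR n by have := le_INR N.+1 n (elimT leP Nn); rewrite S_INR; lra.
  have nm' : INR n < INR m by apply: lt_INR; apply/ltP.
  have mx : INR m <= 2 * x by have := le_INR m M (elimT leP mM); lra.
  have Hr := real_gap e C e0 C0 HC n m n0 nm.
  have lrad : forall j, kfull k j -> INR j <= 2 * x -> K * ln (INR (rad j)) <= ln 2 + ln x.
    move=> j kj jx.
    have j0 : (0 < j)%N by case/andP: kj.
    have h1 : INR (rad j) ^ k <= INR j by rewrite -INR_expn; apply: le_INR; apply/leP; apply: rad_kfull.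
    have r0 : 0 < INR (rad j) by apply: INR_pos; apply: rad_gt0.
    rewrite /K -ln_pow // -ln_mult; try lra.
    apply: ln_le'; first by apply: pow_lt.
    lra.
  have hd0 : (0 < m - n)%N by rewrite subn_gt0.
  have lx : ln x < ln (INR m) by apply: ln_increasing; lra.
  have := gap_alg e K (ln C) (ln x) _ _ _ _ e0 K3 (lrad n kn ltac:(lra)) (lrad m km mx) lx Hr.
  rewrite -/al -/c0 => hg.
  rewrite /D -(exp_ln (INR (m - n))); last by apply: INR_pos.
  case: hg => [hg|->]; last by right.
  by left; apply: exp_increasing.
have [n [Nn nM _ Hn]] := count_gap (kfull k) N M D Hgap M (leqnn M) Tpos.
have nM' : INR n <= INR M by apply: le_INR; apply/leP.
rewrite S_INR in Hn.
change ((INR T - 1) * D <= INR n - (INR N + 1)) in Hn.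
have HT : (INR T - 1) * D <= y by lra.
have HT' : INR T - 1 <= y / D.
  apply: (Rmult_le_reg_r D) => //.
  have -> : y / D * D = y by field; lra.
  done.
have : y / D <= exp c0 * Rp.
  rewrite /D /Rp /Rpower -{1}(exp_ln y); last lra.
  rewrite /Rdiv -exp_Ropp -exp_plus -exp_plus.
  have : ln y - (al * ln x - c0) <= c0 + (2 + eps) / K * ln y.
    have : al * ln y <= al * ln x.
      apply: Rmult_le_compat_l => //; apply: ln_le'; lra.
    have : (1 - al) * ln y <= (2 + eps) / K * ln y by apply: Rmult_le_compat_r.
    nra.
  move=> h; apply: exp_le'; lra.
lra.
Qed.
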